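(* Let $M_\varphi$ be a hyperbolic once-punctured torus bundle with fibre $S$. For any irreducible representation $\rho\colon\pi_1(S)\to\mathrm{SL}(2,\mathbb{C})$ whose character $\chi_\rho$ lies in $X_\varphi(S)$, there exists $T\in\mathrm{SL}(2,\mathbb{C})$ such that $T^{-1}\rho(\gamma)T=\rho(\varphi(\gamma))$ for all $\gamma\in\pi_1(S)$. Moreover, $T$ is unique up to sign, and at least one of $\operatorname{tr}T$, $\operatorname{tr}(\rho(a)T)$, $\operatorname{tr}(\rho(b)T)$, $\operatorname{tr}(\rho(ab)T)$ is nonzero.
   Context: $\pi_1(S)$ is free on $a,b$ and $\varphi$ denotes the automorphism of $\pi_1(S)$ induced by the monodromy. $X(S)\cong\mathbb{C}^3$ is the $\mathrm{SL}(2,\mathbb{C})$-character variety of $\pi_1(S)$ with coordinates $(\operatorname{tr}\rho(a),\operatorname{tr}\rho(b),\operatorname{tr}\rho(ab))$, and $X_\varphi(S)=\{\chi\in X(S):\chi=\chi\circ\varphi\}$. *)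

(* Defs.v *)
From HB Require Import structures.
From mathcomp Require Import all_boot all_order all_algebra.
From mathcomp Require Import reals complex.
Set Implicit Arguments. Unset Strict Implicit. Unset Printing Implicit Defensive.
Import Order.TTheory GRing.Theory Num.Theory.
Local Open Scope ring_scope.

(* Words in the free group F(a,b) = pi_1(S).
   A letter is (g, e): g = false means a, g = true means b;
   e = false means exponent +1, e = true means exponent -1. *)
Definition letter := (bool * bool)%type.
Definition word := seq letter.
Definition gen_a : word := [:: (false, false)].
Definition gen_b : word := [:: (true, false)].
Definition inv_letter (x : letter) : letter := (x.1, ~~ x.2).
Definition inv_word (w : word) : word := rev (map inv_letter w).

(* free reduction: words represent the same element of F2 iff they have the
   same reduced form *)
Definition reduce_cons (x : letter) (s : word) : word :=
  if s is y :: s' then (if y == inv_letter x then s' else x :: s) else [:: x].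
Definition reduce (w : word) : word := foldr reduce_cons [::] w.

(* an endomorphism of F2 is given by the images of a and b *)
Definition endo := (word * word)%type.
Definition subst_letter (phi : endo) (x : letter) : word :=
  let w := if x.1 then phi.2 else phi.1 in if x.2 then inv_word w else w.
Definition apply_endo (phi : endo) (w : word) : word :=
  flatten (map (subst_letter phi) w).

Definition is_aut (phi : endo) : Prop :=
  exists psi : endo,
    [/\ reduce (apply_endo phi (apply_endo psi gen_a)) = gen_a,
        reduce (apply_endo phi (apply_endo psi gen_b)) = gen_b,
        reduce (apply_endo psi (apply_endo phi gen_a)) = gen_a &
        reduce (apply_endo psi (apply_endo phi gen_b)) = gen_b].

Definition expsum (g : bool) (w : word) : int :=
  \sum_(x <- w | x.1 == g) (if x.2 then (-1)%R else 1%R).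

(* the induced action of phi on H_1(S;Z) = Z^2 (columns = images of a, b) *)
Definition hom_trace (phi : endo) : int :=
  expsum false phi.1 + expsum true phi.2.
Definition hom_det (phi : endo) : int :=
  expsum false phi.1 * expsum true phi.2 - expsum false phi.2 * expsum true phi.1.

(* phi is the monodromy of a hyperbolic (orientable) once-punctured torus
   bundle: an automorphism of F2 whose action on homology is in SL(2,Z)
   and is Anosov, i.e. |trace| > 2 *)
Definition hyperbolic_monodromy (phi : endo) : Prop :=
  [/\ is_aut phi, hom_det phi = 1 & 2 < `|hom_trace phi|].

Section Rep.
Variable C : comUnitRingType.
Definition in_SL2 (M : 'M[C]_2) : Prop := \det M = 1.
(* a representation rho of F2 is determined by (rho a, rho b) *)
Definition rep := ('M[C]_2 * 'M[C]_2)%type.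
Definition eval_letter (rho : rep) (x : letter) : 'M[C]_2 :=
  let M := if x.1 then rho.2 else rho.1 in if x.2 then invmx M else M.
Definition eval_word (rho : rep) (w : word) : 'M[C]_2 :=
  \prod_(x <- w) eval_letter rho x.
Definition is_SL2_rep (rho : rep) : Prop := in_SL2 rho.1 /\ in_SL2 rho.2.
End Rep.

(* irreducible: no proper nonzero invariant subspace of C^2, i.e. no line
   (spanned by a nonzero row vector v, matrices acting on the right) invariant
   under both rho(a) and rho(b) *)
Definition irreducible_rep (C : fieldType) (rho : rep C) : Prop :=
  ~ exists v : 'rV[C]_2, v != 0 /\
      (exists la : C, v *m rho.1 = la *: v) /\ (exists lb : C, v *m rho.2 = lb *: v).

(* chi_rho lies in X_phi(S): chi_rho = chi_rho o phi as functions on pi_1(S) *)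
Definition char_fixed (C : comUnitRingType) (phi : endo) (rho : rep C) : Prop :=
  forall w : word, \tr (eval_word rho w) = \tr (eval_word rho (apply_endo phi w)).

Definition intertwines (C : comUnitRingType) (phi : endo) (rho : rep C)
  (T : 'M[C]_2) : Prop :=
  forall w : word, invmx T *m eval_word rho w *m T = eval_word rho (apply_endo phi w).

(* Main.v *)
Require Import Defs.
From HB Require Import structures.
From mathcomp Require Import all_boot all_order all_algebra.
From mathcomp Require Import reals complex.
From mathcomp Require Import ring.
Import Order.TTheory GRing.Theory Num.Theory.
Set Implicit Arguments. Unset Strict Implicit. Unset Printing Implicit Defensive.
Local Open Scope ring_scope.

Section Tool.
Variable C : fieldType.

Definition m2 (a b c d : C) : 'M[C]_2 :=
  \matrix_(i, j) if (i : nat) == 0%N then (if (j : nat) == 0%N then a else b)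
                 else (if (j : nat) == 0%N then c else d).
Definition r2 (p q : C) : 'rV[C]_2 := \row_j if (j : nat) == 0%N then p else q.

Lemma m2_eta (M : 'M[C]_2) : M = m2 (M 0 0) (M 0 1) (M 1 0) (M 1 1).
Proof.
apply/matrixP=> i j; rewrite !mxE.
by case: i => [[|[|//]] ?]; case: j => [[|[|//]] ?]; congr (M _ _); apply: val_inj.
Qed.

Lemma r2_eta (v : 'rV[C]_2) : v = r2 (v 0 0) (v 0 1).
Proof.
apply/matrixP=> i j; rewrite !mxE (ord1 i).
by case: j => [[|[|//]] ?]; congr (v _ _); apply: val_inj.
Qed.

Lemma m2_mul a b c d e f g h :
  m2 a b c d *m m2 e f g h = m2 (a*e+b*g) (a*f+b*h) (c*e+d*g) (c*f+d*h).
Proof.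
apply/matrixP=> i j; rewrite !mxE !big_ord_recl big_ord0 !mxE /=.
by case: i => [[|[|//]] ?]; case: j => [[|[|//]] ?]; rewrite /= addr0.
Qed.

Lemma r2_mul p q a b c d : r2 p q *m m2 a b c d = r2 (p * a + q * c) (p * b + q * d).
Proof.
apply/matrixP=> i j; rewrite !mxE !big_ord_recl big_ord0 !mxE /=.
by case: j => [[|[|//]] ?]; rewrite /= addr0.
Qed.

Lemma m2_tr a b c d : \tr (m2 a b c d) = a + d.
Proof. by rewrite /mxtrace !big_ord_recl big_ord0 !mxE /= addr0. Qed.

Lemma m2_det a b c d : \det (m2 a b c d) = a * d - b * c.
Proof.
rewrite (expand_det_row _ 0) !big_ord_recl big_ord0 /cofactor !det_mx11 !mxE /=.
rewrite /bump /= !expr0 !expr1 !mul1r addr0 mulN1r; ring.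
Qed.

Lemma m2_add a b c d e f g h :
  m2 a b c d + m2 e f g h = m2 (a+e) (b+f) (c+g) (d+h).
Proof.
apply/matrixP=> i j; rewrite !mxE.
by case: i => [[|[|//]] ?]; case: j => [[|[|//]] ?].
Qed.

Lemma m2_scale k a b c d : k *: m2 a b c d = m2 (k*a) (k*b) (k*c) (k*d).
Proof.
apply/matrixP=> i j; rewrite !mxE.
by case: i => [[|[|//]] ?]; case: j => [[|[|//]] ?].
Qed.

Lemma r2_scale k p q : k *: r2 p q = r2 (k * p) (k * q).
Proof. by apply/matrixP=> i j; rewrite !mxE; case: j => [[|[|//]] ?]. Qed.

Lemma m2_opp a b c d : - m2 a b c d = m2 (-a) (-b) (-c) (-d).
Proof.
apply/matrixP=> i j; rewrite !mxE.
by case: i => [[|[|//]] ?]; case: j => [[|[|//]] ?].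
Qed.

Lemma m2_1 : (1%:M : 'M[C]_2) = m2 1 0 0 1.
Proof.
apply/matrixP=> i j; rewrite !mxE.
by case: i => [[|[|//]] ?]; case: j => [[|[|//]] ?].
Qed.

Lemma m2_inj a b c d a' b' c' d' :
  m2 a b c d = m2 a' b' c' d' -> [/\ a = a', b = b', c = c' & d = d'].
Proof.
move=> /matrixP H.
have := H 0 0; have := H 0 1; have := H 1 0; have := H 1 1.
by rewrite !mxE /= => -> -> -> ->.
Qed.

Lemma r2_inj p q p' q' : r2 p q = r2 p' q' -> p = p' /\ q = q'.
Proof. by move=> /matrixP H; have := H 0 0; have := H 0 1; rewrite !mxE /= => -> ->. Qed.

Lemma r2_eq0 p q : (r2 p q == 0) = (p == 0) && (q == 0).
Proof.
apply/eqP/andP => [H|[/eqP-> /eqP->]].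
  have /r2_inj[-> ->] : r2 p q = r2 0 0 by rewrite H; apply/matrixP=> i j; rewrite !mxE; case: ifP.
  by [].
by apply/matrixP=> i j; rewrite !mxE; case: ifP.
Qed.

Lemma m2_inv a b c d : a * d - b * c != 0 ->
  invmx (m2 a b c d) = (a * d - b * c)^-1 *: m2 d (-b) (-c) a.
Proof.
move=> H.
have U : m2 a b c d \in unitmx by rewrite unitmxE m2_det unitfE.
apply: (@mulIr _ (m2 a b c d)); first by [].
rewrite -!mulmxE mulVmx // -scalemxAl m2_mul m2_scale m2_1.
congr m2; field; done.
Qed.

End Tool.

Ltac comb e := apply/eqP; rewrite -subr_eq0; apply/eqP; transitivity e; [ring | ].

Section Core.
Variable C : numClosedFieldType.

Lemma quad_root (x : C) : exists l : C, l^+2 - x * l + 1 = 0.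
Proof.
set s := sqrtC (x^+2 - 4).
have hs : s^+2 = x^+2 - 4 by rewrite sqrtCK.
have h2 : (2:C) != 0 by rewrite pnatr_eq0.
exists ((x + s) / 2).
transitivity ((s^+2 - (x^+2 - 4)) / 4); last by rewrite hs subrr mul0r.
by field.
Qed.

Lemma ker_vec (n1 n2 n3 n4 : C) : n1 * n4 - n2 * n3 = 0 ->
  exists p q, (p != 0 \/ q != 0) /\ p * n1 + q * n3 = 0 /\ p * n2 + q * n4 = 0.
Proof.
move=> hd.
have [n4z|n4nz] := eqVneq n4 0; last first.
  exists n4, (-n2); split; first by left.
  by split; [rewrite -hd | ]; ring.
have [n2z|n2nz] := eqVneq n2 0; last first.
  exists n4, (-n2); split; first by right; rewrite oppr_eq0.
  by split; [rewrite -hd | ]; ring.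
have [n3z|n3nz] := eqVneq n3 0; last first.
  exists n3, (-n1); split; first by left.
  by rewrite n2z n4z; split; ring.
exists 0, 1; split; first by right; rewrite oner_eq0.
by rewrite n4z n2z n3z; split; ring.
Qed.

Lemma prop_vec (p q r t : C) : (p != 0 \/ q != 0) -> p * t - q * r = 0 ->
  exists d, r = d * p /\ t = d * q.
Proof.
move=> [pn|qn] h.
  exists (r/p); split; first by field.
  apply: (mulfI pn); transitivity (r * q); last by field.
  by apply/eqP; rewrite -subr_eq0 -h; apply/eqP; ring.
exists (t/q); split; last by field.
apply: (mulfI qn); transitivity (t * p); last by field.
by apply/eqP; rewrite -subr_eq0 -oppr_eq0 -h; apply/eqP; ring.
Qed.

Lemma r2_neq0 (p q : C) : (p != 0 \/ q != 0) -> r2 p q != 0.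
Proof. by rewrite r2_eq0 negb_and => -[->|->] //; rewrite orbT. Qed.

Lemma irr_coord (a1 a2 a3 a4 b1 b2 b3 b4 p q c d : C) :
  irreducible_rep (m2 a1 a2 a3 a4, m2 b1 b2 b3 b4) ->
  (p != 0 \/ q != 0) ->
  p * a1+q * a3 = c * p -> p * a2+q * a4 = c * q -> p * b1+q * b3 = d * p -> p * b2+q * b4 = d * q -> False.
Proof.
move=> H nz h1 h2 h3 h4; apply: H; exists (r2 p q); split; first exact: r2_neq0.
by split; [exists c|exists d]; rewrite /= r2_mul r2_scale ?h1 ?h2 ?h3 ?h4.
Qed.

Lemma nf (a1 a2 a3 a4 b1 b2 b3 b4 p q l x y z : C) :
  b1 * b4 - b2 * b3 - 1 = 0 ->
  a1 + a4 = x -> b1 + b4 = y -> a1 * b1 + a2 * b3 + a3 * b2 + a4 * b4 = z ->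
  p * a1+q * a3 - l * p = 0 -> p * a2+q * a4 - l * q = 0 ->
  let P := m2 p q (p * b1+q * b3) (p * b2+q * b4) in
  P *m m2 a1 a2 a3 a4 = m2 l 0 (z - (x - l) * y) (x - l) *m P /\
  P *m m2 b1 b2 b3 b4 = m2 0 1 (-1) y *m P.
Proof.
move=> dB hx hy hz E1 E2 P; rewrite /P !m2_mul -hx -hy -hz; split; congr m2.
- by comb (p * a1+q * a3 - l * p); rewrite E1.
- by comb (p * a2+q * a4 - l * q); rewrite E2.
- by comb ((b1+b4) * (p * a1+q * a3 - l * p) - ((p * a1+q * a3 - l * p) * b1 + (p * a2+q * a4 - l * q) * b3)); rewrite E1 E2; ring.
- by comb ((b1+b4) * (p * a2+q * a4 - l * q) - ((p * a1+q * a3 - l * p) * b2 + (p * a2+q * a4 - l * q) * b4)); rewrite E1 E2; ring.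
- ring.
- ring.
- by comb (- p * (b1 * b4 - b2 * b3 - 1)); rewrite dB; ring.
- by comb (- q * (b1 * b4 - b2 * b3 - 1)); rewrite dB; ring.
Qed.


Lemma nf_red (l m al y : C) : l * m = 1 ->
  al ^+ 2 - al * y * (l - m) + (l - m) ^+ 2 = 0 ->
  exists s t c d, (s != 0 \/ t != 0) /\
    r2 s t *m m2 l 0 al m = c *: r2 s t /\ r2 s t *m m2 0 1 (-1) y = d *: r2 s t.
Proof.
move=> hlm hD.
have [lm|lmn] := eqVneq (l - m) 0.
  have al0 : al = 0.
    by move: hD; rewrite lm mulr0 subr0 expr0n addr0 => /eqP; rewrite expf_eq0 /= => /eqP.
  have hm : m = l by apply/eqP; rewrite eq_sym -subr_eq0 lm.
  have [nu hnu] := quad_root y.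
  exists 1, (- nu), l, nu; split; first by left; rewrite oner_eq0.
  rewrite !r2_mul !r2_scale al0 hm; split; congr r2; try ring.
  by comb (nu ^+ 2 - y * nu + 1); rewrite hnu.
have [al0|aln] := eqVneq al 0.
  have : (l - m) ^+ 2 = 0 by rewrite -hD al0; ring.
  by move/eqP; rewrite expf_eq0 /= (negbTE lmn).
exists (- al), (l - m), m, ((l - m) / al); split; first by right.
rewrite !r2_mul !r2_scale; split; congr r2; try ring.
- by field.
- apply: (mulfI aln); transitivity ((l - m) ^+ 2); last by field.
  by comb (- (al ^+ 2 - al * y * (l - m) + (l - m) ^+ 2)); rewrite hD; ring.
Qed.

Lemma trQ (l m al y q1 q2 q3 q4 : C) :
  al ^+ 2 - al * y * (l - m) + (l - m) ^+ 2 != 0 ->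
  \tr (m2 q1 q2 q3 q4) = 0 ->
  \tr (m2 l 0 al m *m m2 q1 q2 q3 q4) = 0 ->
  \tr (m2 0 1 (-1) y *m m2 q1 q2 q3 q4) = 0 ->
  \tr (m2 l 0 al m *m m2 0 1 (-1) y *m m2 q1 q2 q3 q4) = 0 ->
  m2 q1 q2 q3 q4 = 0.
Proof.
rewrite !m2_mul !m2_tr => hD E1 E2 E3 E4.
have h4 : (al ^+ 2 - al * y * (l - m) + (l - m) ^+ 2) * q4 = 0.
  comb (al * ((l * 0 + 0 * -1) * q1 + (l * 1 + 0 * y) * q3 +
      ((al * 0 + m * -1) * q2 + (al * 1 + m * y) * q4) - l * (0 * q1 + 1 * q3 + (-1 * q2 + y * q4)))
      - (l - m) * ((l * q1 + 0 * q3 + (al * q2 + m * q4)) - l * (q1 + q4))).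
  by rewrite E1 E2 E3 E4; ring.
have h2 : (al ^+ 2 - al * y * (l - m) + (l - m) ^+ 2) * q2 = 0.
  comb (((l * q1 + 0 * q3 + (al * q2 + m * q4)) - l * (q1 + q4)) * (al - (l - m) * y)
      - (m - l) * ((l * 0 + 0 * -1) * q1 + (l * 1 + 0 * y) * q3 +
      ((al * 0 + m * -1) * q2 + (al * 1 + m * y) * q4) - l * (0 * q1 + 1 * q3 + (-1 * q2 + y * q4)))).
  by rewrite E1 E2 E3 E4; ring.
have q40 : q4 = 0 by move/eqP: h4; rewrite mulf_eq0 (negbTE hD) => /eqP.
have q20 : q2 = 0 by move/eqP: h2; rewrite mulf_eq0 (negbTE hD) => /eqP.
have q10 : q1 = 0 by move: E1; rewrite q40 addr0.
have q30 : q3 = 0 by move: E3; rewrite q40 q20; move=> <-; ring.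
rewrite q10 q20 q30 q40; apply/matrixP=> i j; rewrite !mxE; by do 2 case: ifP.
Qed.

Lemma vec_unit (u : 'rV[C]_2) (P : 'M[C]_2) : u != 0 -> P \in unitmx -> u *m P != 0.
Proof.
move=> un Pu; apply: contra un => /eqP h.
by rewrite -(mulmxK Pu u) h mul0mx.
Qed.

Lemma det_ker (u : 'rV[C]_2) (N : 'M[C]_2) : u != 0 -> u *m N = 0 -> \det N = 0.
Proof.
move=> un h; apply/eqP; apply: contraR un => hN.
have Nu : N \in unitmx by rewrite unitmxE unitfE.
by rewrite -(mulmxK Nu u) h mul0mx.
Qed.

Lemma comm_det (a1 a2 a3 a4 b1 b2 b3 b4 : C) :
  a1 * a4 - a2 * a3 = 1 -> b1 * b4 - b2 * b3 = 1 ->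
  let x := a1 + a4 in let y := b1 + b4 in
  let z := a1 * b1 + a2 * b3 + a3 * b2 + a4 * b4 in
  \det (m2 a1 a2 a3 a4 *m m2 b1 b2 b3 b4 - m2 b1 b2 b3 b4 *m m2 a1 a2 a3 a4)
   = - (x ^+ 2 + y ^+ 2 + z ^+ 2 - x * y * z - 4).
Proof.
move=> dA dB x y z; rewrite !m2_mul m2_opp m2_add m2_det.
rewrite -[4](mulr1) -{1}dA -dB -[y ^+ 2](mulr1) -dA -[x ^+ 2](mulr1) -dB /x /y /z.
ring.
Qed.

Lemma conj_comm (T A A' : 'M[C]_2) : T \in unitmx -> A *m T = T *m A' ->
  invmx T *m A *m T = A'.
Proof. by move=> Tu H; rewrite -mulmxA H mulKmx. Qed.

Lemma move_inv (P A A0 : 'M[C]_2) : P \in unitmx -> P *m A = A0 *m P ->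
  A *m invmx P = invmx P *m A0.
Proof.
move=> Pu H.
have -> : A *m invmx P = invmx P *m (P *m A *m invmx P) by rewrite -!mulmxA mulKmx.
by rewrite H mulmxK.
Qed.

Lemma eig_coord (a1 a2 a3 a4 l : C) : a1 * a4 - a2 * a3 = 1 ->
  l ^+ 2 - (a1 + a4) * l + 1 = 0 ->
  exists p q, (p != 0 \/ q != 0) /\ p * a1 + q * a3 - l * p = 0 /\ p * a2 + q * a4 - l * q = 0.
Proof.
move=> dA hl.
have [|p [q [nz [e1 e2]]]] := @ker_vec (a1 - l) a2 a3 (a4 - l).
  by rewrite -hl -dA; ring.
by exists p, q; split => //; split; [rewrite -e1|rewrite -e2]; ring.
Qed.

Lemma core_exists (a1 a2 a3 a4 b1 b2 b3 b4 c1 c2 c3 c4 d1 d2 d3 d4 : C) :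
  a1 * a4 - a2 * a3 = 1 -> b1 * b4 - b2 * b3 = 1 ->
  c1 * c4 - c2 * c3 = 1 -> d1 * d4 - d2 * d3 = 1 ->
  irreducible_rep (m2 a1 a2 a3 a4, m2 b1 b2 b3 b4) ->
  a1 + a4 = c1 + c4 -> b1 + b4 = d1 + d4 ->
  a1 * b1 + a2 * b3 + a3 * b2 + a4 * b4 = c1 * d1 + c2 * d3 + c3 * d2 + c4 * d4 ->
  let A := m2 a1 a2 a3 a4 in let B := m2 b1 b2 b3 b4 in
  let A' := m2 c1 c2 c3 c4 in let B' := m2 d1 d2 d3 d4 in
  exists T, [/\ \det T = 1, invmx T *m A *m T = A', invmx T *m B *m T = B' &
   [\/ \tr T != 0, \tr (A *m T) != 0, \tr (B *m T) != 0 | \tr (A *m B *m T) != 0]].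
Proof.
move=> dA dB dA' dB' irr hx hy hz A B A' B'.
set x := a1 + a4; set y := b1 + b4; set z := a1 * b1 + a2 * b3 + a3 * b2 + a4 * b4.
have [l hl] := quad_root x.
have [p [q [nz [E1 E2]]]] := eig_coord dA hl.
have [p' [q' [nz' [E1' E2']]]] : exists p q, (p != 0 \/ q != 0) /\
    p * c1 + q * c3 - l * p = 0 /\ p * c2 + q * c4 - l * q = 0.
  by apply: eig_coord => //; rewrite -hx.
have dB0 : b1 * b4 - b2 * b3 - 1 = 0 by rewrite dB subrr.
have dB0' : d1 * d4 - d2 * d3 - 1 = 0 by rewrite dB' subrr.
have [PA PB] := nf dB0 (erefl x) (erefl y) (erefl z) E1 E2.
have [PA' PB'] := nf dB0' (esym hx) (esym hy) (esym hz) E1' E2'.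
set P := m2 p q _ _ in PA PB.
set P' := m2 p' q' _ _ in PA' PB'.
set A0 := m2 l 0 _ _ in PA PA'.
set B0 := m2 0 1 (-1) y in PB PB'.
set D := x ^+ 2 + y ^+ 2 + z ^+ 2 - x * y * z - 4.
set al := z - (x - l) * y.
have hlm : l * (x - l) = 1 by comb (- (l ^+ 2 - x * l + 1)); rewrite hl; ring.
have hDD : al ^+ 2 - al * y * (l - (x - l)) + (l - (x - l)) ^+ 2 = D.
  rewrite /D /al. by comb (- (l ^+ 2 - x * l + 1) * (y ^+ 2 - 4)); rewrite hl; ring.
have Pu : P \in unitmx.
  rewrite unitmxE unitfE m2_det; apply/eqP => h0.
  have [dd [h1 h2]] := prop_vec nz h0.
  apply: (irr_coord irr nz (c := l) (d := dd)).
  - by apply/eqP; rewrite -subr_eq0 E1.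
  - by apply/eqP; rewrite -subr_eq0 E2.
  - by rewrite -h1.
  - by rewrite -h2.
have Dn : D != 0.
  apply/eqP => D0.
  have [s [t [c [d [stn [hA hB]]]]]] := nf_red hlm (etrans hDD D0).
  apply: irr; exists (r2 s t *m P); split; first by apply: vec_unit => //; exact: r2_neq0.
  split; [exists c|exists d]; rewrite /= -mulmxA ?PA ?PB mulmxA ?hA ?hB scalemxAl //.
have P'u : P' \in unitmx.
  rewrite unitmxE unitfE m2_det; apply/eqP => h0.
  have [dd [h1 h2]] := prop_vec nz' h0.
  have uA : r2 p' q' *m A' = l *: r2 p' q'.
    rewrite r2_mul r2_scale; congr r2; apply/eqP; rewrite -subr_eq0 ?E1' ?E2' //.
  have uB : r2 p' q' *m B' = dd *: r2 p' q' by rewrite r2_mul r2_scale -h1 -h2.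
  have : \det (A' *m B' - B' *m A') = 0.
    apply: (@det_ker (r2 p' q')); first exact: r2_neq0.
    rewrite mulmxBr !mulmxA uA uB -!scalemxAl uA uB !scalerA mulrC subrr //.
  rewrite comm_det // -hx -hy -hz -/x -/y -/z -/D => /eqP; rewrite oppr_eq0.
  by apply/negP.
set T0 := invmx P *m P'.
have T0u : T0 \in unitmx by rewrite unitmx_mul unitmx_inv Pu.
have cA : A *m T0 = T0 *m A'.
  by rewrite /T0 mulmxA (move_inv Pu PA) -!mulmxA PA'.
have cB : B *m T0 = T0 *m B'.
  by rewrite /T0 mulmxA (move_inv Pu PB) -!mulmxA PB'.
have dT0 : \det T0 != 0 by rewrite -unitfE -unitmxE.
set s := sqrtC (\det T0)^-1.
have hs : s ^+ 2 = (\det T0)^-1 by rewrite sqrtCK.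
have sn : s != 0 by apply/eqP => s0; move: hs; rewrite s0 expr0n /= => /eqP; rewrite eq_sym invr_eq0 (negbTE dT0).
set T := s *: T0.
have Tu : T \in unitmx by rewrite unitmxZ ?unitfE.
exists T; split.
- by rewrite /T detZ hs mulVf.
- by apply: conj_comm => //; rewrite /T -scalemxAl -scalemxAr cA.
- by apply: conj_comm => //; rewrite /T -scalemxAl -scalemxAr cB.
set Q := P' *m invmx P.
have Qu : Q \in unitmx by rewrite unitmx_mul unitmx_inv Pu P'u.
have t1 : \tr T = s * \tr Q by rewrite /T mxtraceZ /T0 mxtrace_mulC.
have t2 : \tr (A *m T) = s * \tr (A0 *m Q).
  by rewrite /T -scalemxAr mxtraceZ /T0 mulmxA (move_inv Pu PA) -mulmxA mxtrace_mulC -mulmxA.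
have t3 : \tr (B *m T) = s * \tr (B0 *m Q).
  by rewrite /T -scalemxAr mxtraceZ /T0 mulmxA (move_inv Pu PB) -mulmxA mxtrace_mulC -mulmxA.
have t4 : \tr (A *m B *m T) = s * \tr (A0 *m B0 *m Q).
  rewrite /T -scalemxAr mxtraceZ; congr (_ * _).
  have -> : A *m B *m T0 = invmx P *m (A0 *m B0) *m P'.
    rewrite /T0 -!mulmxA (mulmxA B) (move_inv Pu PB) -mulmxA (mulmxA A) (move_inv Pu PA).
    by rewrite !mulmxA.
  by rewrite [LHS]mxtrace_mulC mulmxA [RHS]mxtrace_mulC.
have [h1|h1] := eqVneq (\tr T) 0; last by apply: Or41.
have [h2|h2] := eqVneq (\tr (A *m T)) 0; last by apply: Or42.
have [h3|h3] := eqVneq (\tr (B *m T)) 0; last by apply: Or43.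
have [h4|h4] := eqVneq (\tr (A *m B *m T)) 0; last by apply: Or44.
exfalso.
move: h1 h2 h3 h4; rewrite t1 t2 t3 t4 => /eqP h1 /eqP h2 /eqP h3 /eqP h4.
move: h1 h2 h3 h4; rewrite !mulf_eq0 (negbTE sn) /= => /eqP h1 /eqP h2 /eqP h3 /eqP h4.
move: h1 h2 h3 h4 Qu; rewrite [Q]m2_eta => h1 h2 h3 h4.
rewrite (trQ _ h1 h2 h3 h4) ?unitmxE ?det0 ?unitr0 //.
by rewrite /A0 -/al hDD.
Qed.

Lemma ker_line_coord (n1 n2 n3 n4 p q r t : C) :
  ~~ [&& n1 == 0, n2 == 0, n3 == 0 & n4 == 0] -> (p != 0 \/ q != 0) ->
  p * n1 + q * n3 = 0 -> p * n2 + q * n4 = 0 ->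
  r * n1 + t * n3 = 0 -> r * n2 + t * n4 = 0 ->
  exists d, r = d * p /\ t = d * q.
Proof.
move=> nN nz e1 e2 e3 e4; apply: prop_vec nz _.
have k1 : (p * t - q * r) * n1 = 0.
  by comb (t * (p * n1 + q * n3) - q * (r * n1 + t * n3)); rewrite e1 e3; ring.
have k2 : (p * t - q * r) * n2 = 0.
  by comb (t * (p * n2 + q * n4) - q * (r * n2 + t * n4)); rewrite e2 e4; ring.
have k3 : (p * t - q * r) * n3 = 0.
  by comb (p * (r * n1 + t * n3) - r * (p * n1 + q * n3)); rewrite e1 e3; ring.
have k4 : (p * t - q * r) * n4 = 0.
  by comb (p * (r * n2 + t * n4) - r * (p * n2 + q * n4)); rewrite e2 e4; ring.
apply/eqP; apply: contraR nN => hd.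
move/eqP: k1; move/eqP: k2; move/eqP: k3; move/eqP: k4.
by rewrite !mulf_eq0 (negbTE hd) /= => -> -> -> ->.
Qed.

Lemma line_ker (N : 'M[C]_2) (u w : 'rV[C]_2) : N != 0 -> u != 0 ->
  u *m N = 0 -> w *m N = 0 -> exists d, w = d *: u.
Proof.
move=> Nn un.
have nz : u 0 0 != 0 \/ u 0 1 != 0.
  move: un; rewrite {1}[u]r2_eta r2_eq0 negb_and => /orP[h|h]; [left|right]; exact: h.
have nN : ~~ [&& N 0 0 == 0, N 0 1 == 0, N 1 0 == 0 & N 1 1 == 0].
  apply: contra Nn => /and4P[/eqP h1 /eqP h2 /eqP h3 /eqP h4].
  by rewrite [N]m2_eta h1 h2 h3 h4; apply/eqP/matrixP=> i j; rewrite !mxE; do 2 case: ifP.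
rewrite [N]m2_eta [u]r2_eta [w]r2_eta !r2_mul.
have z0 : (0 : 'rV[C]_2) = r2 0 0 by apply/matrixP => i j; rewrite !mxE; case: ifP.
rewrite z0 => /r2_inj[e1 e2] /r2_inj[e3 e4].
have [d [h1 h2]] := ker_line_coord nN nz e1 e2 e3 e4.
by exists d; rewrite r2_scale h1 h2.
Qed.

Lemma comm_of_conj (T T' A : 'M[C]_2) : T \in unitmx -> T' \in unitmx ->
  invmx T *m A *m T = invmx T' *m A *m T' ->
  A *m (T *m invmx T') = (T *m invmx T') *m A.
Proof.
move=> Tu T'u H.
have H1 : A *m T = T *m (invmx T' *m A *m T') by rewrite -H -!mulmxA mulKVmx.
by rewrite mulmxA H1 -!mulmxA mulmxV // mulmx1.
Qed.

Lemma core_unique (A B T T' : 'M[C]_2) : irreducible_rep (A, B) ->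
  \det T = 1 -> \det T' = 1 ->
  invmx T *m A *m T = invmx T' *m A *m T' ->
  invmx T *m B *m T = invmx T' *m B *m T' ->
  T' = T \/ T' = - T.
Proof.
move=> irr dT dT' HA HB.
have Tu : T \in unitmx by rewrite unitmxE dT unitr1.
have T'u : T' \in unitmx by rewrite unitmxE dT' unitr1.
set S := T *m invmx T'.
have cA := comm_of_conj Tu T'u HA; have cB := comm_of_conj Tu T'u HB.
rewrite -/S in cA cB.
have dS : \det S = 1 by rewrite det_mulmx det_inv dT' invr1 dT mulr1.
have [c hc] := quad_root (\tr S).
set N := S - c%:M.
have NA : A *m N = N *m A by rewrite mulmxBr mulmxBl cA mul_mx_scalar mul_scalar_mx.
have NB : B *m N = N *m B by rewrite mulmxBr mulmxBl cB mul_mx_scalar mul_scalar_mx.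
have [N0|Nn] := eqVneq N 0.
  have hS : S = c%:M by apply/eqP; rewrite -subr_eq0 -/N N0.
  have hc2 : c ^+ 2 = 1 by rewrite -dS hS det_scalar.
  have hT : T = c *: T'.
    by rewrite -mul_scalar_mx -hS /S -mulmxA mulVmx // mulmx1.
  have : (c - 1) * (c + 1) = 0 by comb (c ^+ 2 - 1); rewrite hc2 subrr.
  move/eqP; rewrite mulf_eq0 => /orP[/eqP h|/eqP h].
    have c1 : c = 1 by apply/eqP; rewrite -subr_eq0 h.
    by left; rewrite hT c1 scale1r.
  have c1 : c = -1 by apply/eqP; rewrite -subr_eq0 opprK h.
  by right; rewrite hT c1 scaleN1r opprK.
exfalso.
clearbody S.
have dN : N 0 0 * N 1 1 - N 0 1 * N 1 0 = 0.
  have eS : m2 (S 0 0) (S 0 1) (S 1 0) (S 1 1) = S by rewrite -m2_eta.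
  transitivity (c ^+ 2 - (S 0 0 + S 1 1) * c + 1 + ((S 0 0 * S 1 1 - S 0 1 * S 1 0) - 1)).
    by rewrite /N !mxE /= !mulr1n !mulr0n !subr0; ring.
  by rewrite -(m2_tr (S 0 0) (S 0 1) (S 1 0)) -(m2_det (S 0 0) (S 0 1) (S 1 0)) eS dS hc subrr addr0.
have [p [q [nz [e1 e2]]]] := ker_vec dN.
have uN : r2 p q *m N = 0.
  rewrite [N]m2_eta r2_mul e1 e2.
  by apply/matrixP => i j; rewrite !mxE; case: ifP.
have un : r2 p q != 0 by exact: r2_neq0.
have [da hda] : exists d, r2 p q *m A = d *: r2 p q.
  apply: (line_ker Nn un uN).
  by rewrite -mulmxA NA mulmxA uN mul0mx.
have [db hdb] : exists d, r2 p q *m B = d *: r2 p q.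
  apply: (line_ker Nn un uN).
  by rewrite -mulmxA NB mulmxA uN mul0mx.
by apply: irr; exists (r2 p q); split => //; split; [exists da|exists db].
Qed.

Lemma tr_mul_coord (A B : 'M[C]_2) :
  \tr (A *m B) = A 0 0 * B 0 0 + A 0 1 * B 1 0 + A 1 0 * B 0 1 + A 1 1 * B 1 1.
Proof.
have l1 : lift ord0 (ord0 : 'I_1) = 1 :> 'I_2 by apply: val_inj.
have o0 : ord0 = 0 :> 'I_2 by apply: val_inj.
rewrite /mxtrace !big_ord_recl big_ord0 !mxE !big_ord_recl !big_ord0 /=.
rewrite l1 o0; ring.
Qed.

Lemma core_exists_mx (A B A' B' : 'M[C]_2) :
  \det A = 1 -> \det B = 1 -> \det A' = 1 -> \det B' = 1 ->
  irreducible_rep (A, B) ->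
  \tr A = \tr A' -> \tr B = \tr B' -> \tr (A *m B) = \tr (A' *m B') ->
  exists T, [/\ \det T = 1, invmx T *m A *m T = A', invmx T *m B *m T = B' &
   [\/ \tr T != 0, \tr (A *m T) != 0, \tr (B *m T) != 0 | \tr (A *m B *m T) != 0]].
Proof.
move=> dA dB dA' dB' irr tA tB tAB.
have := @core_exists (A 0 0) (A 0 1) (A 1 0) (A 1 1) (B 0 0) (B 0 1) (B 1 0) (B 1 1)
  (A' 0 0) (A' 0 1) (A' 1 0) (A' 1 1) (B' 0 0) (B' 0 1) (B' 1 0) (B' 1 1).
rewrite -!m2_eta; apply.
- by rewrite -m2_det -m2_eta.
- by rewrite -m2_det -m2_eta.
- by rewrite -m2_det -m2_eta.
- by rewrite -m2_det -m2_eta.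
- by [].
- by rewrite -(m2_tr _ (A 0 1) (A 1 0)) -(m2_tr _ (A' 0 1) (A' 1 0)) -!m2_eta.
- by rewrite -(m2_tr _ (B 0 1) (B 1 0)) -(m2_tr _ (B' 0 1) (B' 1 0)) -!m2_eta.
- by move: tAB; rewrite !tr_mul_coord.
Qed.

Lemma invmx_mul (A B : 'M[C]_2) : A \in unitmx -> B \in unitmx ->
  invmx (A *m B) = invmx B *m invmx A.
Proof.
move=> Au Bu.
have ABu : A *m B \in unitmx by rewrite unitmx_mul Au.
have H : (invmx B *m invmx A) *m (A *m B) = 1%:M.
  by rewrite -mulmxA (mulmxA (invmx A)) mulVmx // mul1mx mulVmx.
by rewrite -[invmx (A *m B)]mul1mx -H -mulmxA mulmxV // mulmx1.
Qed.

Definition SL (M : 'M[C]_2) := \det M = 1.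

Lemma SL_unit M : SL M -> M \in unitmx.
Proof. by rewrite /SL unitmxE => ->; rewrite unitr1. Qed.

Lemma eval_nil (rho : rep C) : eval_word rho [::] = 1.
Proof. by rewrite /eval_word big_nil. Qed.

Lemma eval_cons (rho : rep C) x w :
  eval_word rho (x :: w) = eval_letter rho x *m eval_word rho w.
Proof. by rewrite /eval_word big_cons. Qed.

Lemma eval_cat (rho : rep C) w1 w2 :
  eval_word rho (w1 ++ w2) = eval_word rho w1 *m eval_word rho w2.
Proof.
elim: w1 => [|x w1 IH]; first by rewrite eval_nil mul1mx.
by rewrite cat_cons !eval_cons IH mulmxA.
Qed.

Lemma SL_letter (rho : rep C) x : SL rho.1 -> SL rho.2 -> SL (eval_letter rho x).
Proof.
rewrite /SL /eval_letter => h1 h2.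
by case: x => [[] []] /=; rewrite ?det_inv ?h1 ?h2 ?invr1.
Qed.

Lemma SL_word (rho : rep C) w : SL rho.1 -> SL rho.2 -> SL (eval_word rho w).
Proof.
move=> h1 h2; elim: w => [|x w IH]; first by rewrite eval_nil /SL -[1]/(1%:M) det1.
by rewrite eval_cons /SL det_mulmx IH (SL_letter x h1 h2) mulr1.
Qed.

Lemma eval_inv (rho : rep C) w : SL rho.1 -> SL rho.2 ->
  eval_word rho (inv_word w) = invmx (eval_word rho w).
Proof.
move=> h1 h2; elim: w => [|x w IH].
  by rewrite /inv_word /= eval_nil -[1]/(1%:M) invmx1.
have -> : inv_word (x :: w) = inv_word w ++ [:: inv_letter x].
  by rewrite /inv_word /= rev_cons cats1.
rewrite eval_cat IH eval_cons eval_nil mulmx1 [in RHS]eval_cons.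
have uL := SL_unit (SL_letter x h1 h2); have uW := SL_unit (SL_word w h1 h2).
rewrite invmx_mul //.
congr (_ *m _).
by clear uL; case: x => [[] []]; rewrite /eval_letter /inv_letter /= ?invmxK.
Qed.

Definition rho_phi (phi : endo) (rho : rep C) : rep C :=
  (eval_word rho phi.1, eval_word rho phi.2).

Lemma eval_apply (phi : endo) (rho : rep C) w : SL rho.1 -> SL rho.2 ->
  eval_word rho (apply_endo phi w) = eval_word (rho_phi phi rho) w.
Proof.
move=> h1 h2; elim: w => [|x w IH]; first by rewrite /apply_endo /= !eval_nil.
have -> : apply_endo phi (x :: w) = subst_letter phi x ++ apply_endo phi w by [].
rewrite eval_cat IH eval_cons; congr (_ *m _).
by case: x => [[] []]; rewrite /subst_letter /eval_letter /= ?eval_inv.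
Qed.

Lemma eval_gen_a (rho : rep C) : eval_word rho gen_a = rho.1.
Proof. by rewrite eval_cons eval_nil mulmx1. Qed.

Lemma eval_gen_b (rho : rep C) : eval_word rho gen_b = rho.2.
Proof. by rewrite eval_cons eval_nil mulmx1. Qed.

Lemma conj_inv (T M : 'M[C]_2) : T \in unitmx -> M \in unitmx ->
  invmx T *m invmx M *m T = invmx (invmx T *m M *m T).
Proof.
move=> Tu Mu.
have iTu : invmx T \in unitmx by rewrite unitmx_inv.
have TMu : invmx T *m M \in unitmx by rewrite unitmx_mul iTu.
by rewrite invmx_mul // invmx_mul // invmxK mulmxA.
Qed.

Lemma conj_word (rho rho' : rep C) (T : 'M[C]_2) : T \in unitmx ->
  SL rho.1 -> SL rho.2 ->
  invmx T *m rho.1 *m T = rho'.1 -> invmx T *m rho.2 *m T = rho'.2 ->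
  forall w, invmx T *m eval_word rho w *m T = eval_word rho' w.
Proof.
move=> Tu h1 h2 c1 c2; elim => [|x w IH].
  by rewrite !eval_nil mulmx1 mulVmx.
have cl : invmx T *m eval_letter rho x *m T = eval_letter rho' x.
  case: x => [[] []]; rewrite /eval_letter /= ?c1 ?c2 //.
  - by rewrite -c2 conj_inv // SL_unit.
  - by rewrite -c1 conj_inv // SL_unit.
rewrite !eval_cons -cl -IH.
by rewrite -!mulmxA (mulmxA T) mulmxV // mul1mx.
Qed.

End Core.

Unset Implicit Arguments. Set Strict Implicit.
Local Open Scope complex_scope.

Theorem lemma3p8 (R : realType) (phi : endo) (rho : rep R[i]) :
  hyperbolic_monodromy phi ->
  is_SL2_rep rho -> irreducible_rep rho -> char_fixed phi rho ->
  exists T : 'M[R[i]]_2,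
    [/\ in_SL2 T, intertwines phi rho T,
        (forall T' : 'M[R[i]]_2, in_SL2 T' -> intertwines phi rho T' ->
           T' = T \/ T' = - T) &
        [\/ \tr T != 0, \tr (rho.1 *m T) != 0, \tr (rho.2 *m T) != 0
          | \tr (rho.1 *m rho.2 *m T) != 0]].
Proof.
move=> _ [h1 h2] irr cf.
have h1' : SL rho.1 := h1.
have h2' : SL rho.2 := h2.
have tA : \tr rho.1 = \tr (eval_word rho phi.1).
  by have := cf gen_a; rewrite eval_gen_a eval_apply // eval_gen_a.
have tB : \tr rho.2 = \tr (eval_word rho phi.2).
  by have := cf gen_b; rewrite eval_gen_b eval_apply // eval_gen_b.
have tAB : \tr (rho.1 *m rho.2) = \tr (eval_word rho phi.1 *m eval_word rho phi.2).
  have := cf [:: (false, false); (true, false)].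
  by rewrite eval_apply // !eval_cons !eval_nil !mulmx1.
have dA' : \det (eval_word rho phi.1) = 1 by apply: SL_word.
have dB' : \det (eval_word rho phi.2) = 1 by apply: SL_word.
have irr' : irreducible_rep (rho.1, rho.2) by case: rho irr {h1 h2 h1' h2' cf tA tB tAB dA' dB'}.
have [T [dT cA cB disj]] := core_exists_mx h1 h2 dA' dB' irr' tA tB tAB.
have Tu : T \in unitmx by apply: SL_unit.
exists T; split => //.
- move=> w; rewrite eval_apply //; exact: conj_word.
- move=> T' dT' HT'.
  have a := HT' gen_a; have b := HT' gen_b.
  rewrite eval_gen_a eval_apply // eval_gen_a in a.
  rewrite eval_gen_b eval_apply // eval_gen_b in b.
  apply: (core_unique irr' dT dT'); [by rewrite cA a | by rewrite cB b].
Qed.
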